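(* There is an absolute constant $c>0$ such that for every $\delta'\in(0,1)$, with probability at least $1-2\delta'$ over the draw of $\mathcal D$, simultaneously for all $V\in\mathcal V$ and $\pi\in\mathcal P$, $$\Big|\mathscr R_{\mathcal D}(\hat g_{V,\pi};V,\pi)-\mathscr R_{\mathcal D}(\mathcal C^\pi_\lambda V;V,\pi)\Big|\le c\left(\epsilon_{\mathcal G,\mathcal V,\mathcal P}+\sqrt{\frac{\iota}{n}\epsilon_{\mathcal G,\mathcal V,\mathcal P}}+\frac{\iota}{n}\right),$$ where $\iota=V_{\lambda,\max}^2\ln\frac{|\mathcal V||\mathcal P||\mathcal G|}{\delta'}$ and $\hat g_{V,\pi}\in\arg\min_{g\in\mathcal G}\mathscr R_{\mathcal D}(g;V,\pi)$.
   Context: Finite MDP with state space $\mathcal S$, action space $\mathcal A$, discount $\gamma\in[0,1)$, kernel $P$, reward $R:\mathcal S\times\mathcal A\to[0,R_{\max}]$; $\lambda>0$. $(\mathbb PV)(s,a)=\sum_{s'}P(s'\mid s,a)V(s')$; $(\mathcal C^\pi_\lambda V)(s,a)=R(s,a)+\gamma(\mathbb PV)(s,a)-\lambda\ln\pi(a\mid s)$. $\mu\in\Delta(\mathcal S\times\mathcal A)$, $\|f\|^2_{2,\mu}=\mathbb E_{\mu}[f(s,a)^2]$. $V_{\lambda,\max}=(R_{\max}+\lambda\ln|\mathcal A|)/(1-\gamma)$. Finite classes $\mathcal V\subset[0,V_{\lambda,\max}]^{\mathcal S}$, $\mathcal P\subset\{\pi:\|\ln\pi\|_\infty\le V_{\lambda,\max}/\lambda\}$,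 $\mathcal G\subset[0,2V_{\lambda,\max}]^{\mathcal S\times\mathcal A}$. Dataset $\mathcal D=\{(s_i,a_i,r_i,s_i')\}_{i=1}^n$ with $(s_i,a_i)$ i.i.d. from $\mu$, $r_i=R(s_i,a_i)$, $s_i'\sim P(\cdot\mid s_i,a_i)$ independently. For a function $g:\mathcal S\times\mathcal A\to\mathbb R$, $\mathscr R_{\mathcal D}(g;V,\pi)=\frac1n\sum_i\big(g(s_i,a_i)-r_i-\gamma V(s_i')+\lambda\ln\pi(a_i\mid s_i)\big)^2$. $\epsilon_{\mathcal G,\mathcal V,\mathcal P}=\max_{V\in\mathcal V,\pi\in\mathcal P}\min_{g\in\mathcal G}\|g-\mathcal C^\pi_\lambda V\|^2_{2,\mu}$. *)

(* Defs.v *)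
From HB Require Import structures.
From mathcomp Require Import all_boot all_order all_algebra.
From mathcomp Require Import all_classical all_reals all_analysis.
Set Implicit Arguments. Unset Strict Implicit. Unset Printing Implicit Defensive.
Import Order.TTheory GRing.Theory Num.Theory.
Local Open Scope ring_scope.

Section Defs.
Variables (R : realType) (S A : finType).

Definition Vlmax (gamma Rmax lam : R) : R :=
  (Rmax + lam * ln (#|A|%:R)) / (1 - gamma).

Definition bellC (P : S -> A -> {ffun S -> R}) (Rw : S -> A -> R) (gamma lam : R)
  (pi : {ffun S * A -> R}) (V : {ffun S -> R}) : {ffun S * A -> R} :=
  [ffun sa => Rw sa.1 sa.2 + gamma * (\sum_(s' : S) P sa.1 sa.2 s' * V s')
              - lam * ln (pi sa)].

Definition sqnorm_mu (mu : {ffun S * A -> R}) (f : S * A -> R) : R :=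
  \sum_(sa : S * A) mu sa * f sa ^+ 2.

(* empirical risk R_D(g; V, pi); a data point is ((s_i, a_i), s'_i), r_i = R(s_i,a_i) *)
Definition emp_risk (n : nat) (Rw : S -> A -> R) (gamma lam : R)
  (D : {ffun 'I_n -> (S * A) * S}) (g : S * A -> R)
  (V : {ffun S -> R}) (pi : {ffun S * A -> R}) : R :=
  n%:R^-1 * \sum_(i < n)
     (g (D i).1 - Rw (D i).1.1 (D i).1.2 - gamma * V (D i).2 + lam * ln (pi (D i).1)) ^+ 2.

Definition seqmin (T : Type) (x0 : T) (f : T -> R) (s : seq T) : R :=
  \big[Num.min/f (head x0 s)]_(x <- s) f x.

(* maximum of a nonnegative f over a (nonempty) sequence *)
Definition seqmax0 (T : Type) (f : T -> R) (s : seq T) : R :=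
  \big[Num.max/0]_(x <- s) f x.

Definition eps_approx (P : S -> A -> {ffun S -> R}) (Rw : S -> A -> R) (gamma lam : R)
  (mu : {ffun S * A -> R}) (Vs : seq {ffun S -> R}) (Ps : seq {ffun S * A -> R})
  (Gs : seq {ffun S * A -> R}) : R :=
  seqmax0 (fun V => seqmax0 (fun pi =>
     seqmin [ffun=> 0] (fun g => sqnorm_mu mu (fun sa => g sa - bellC P Rw gamma lam pi V sa)) Gs)
   Ps) Vs.

(* probability of a sample D of n i.i.d. transitions: (s_i,a_i) ~ mu, s'_i ~ P(.|s_i,a_i) *)
Definition data_weight (n : nat) (mu : {ffun S * A -> R}) (P : S -> A -> {ffun S -> R})
  (D : {ffun 'I_n -> (S * A) * S}) : R :=
  \prod_(i < n) (mu (D i).1 * P (D i).1.1 (D i).1.2 (D i).2).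

Definition data_prob (n : nat) (mu : {ffun S * A -> R}) (P : S -> A -> {ffun S -> R})
  (E : pred {ffun 'I_n -> (S * A) * S}) : R :=
  \sum_(D : {ffun 'I_n -> (S * A) * S} | E D) data_weight mu P D.

End Defs.

(* Main.v *)
Require Import Defs.
From HB Require Import structures.
From mathcomp Require Import all_boot all_order all_algebra.
From mathcomp Require Import all_classical all_reals all_analysis.
From mathcomp Require Import ring lra.
Import Order.TTheory GRing.Theory Num.Theory.
Local Open Scope ring_scope.

Section Ineq.
Variable R : realType.

Lemma expR_le_inv (u : R) : u < 1 -> expR u <= (1 - u)^-1.
Proof.
move=> hu.
have h := expR_ge1Dx (- u).
rewrite expRN in h.
have h0 : 0 < 1 - u by lra.
rewrite -(invrK (expR u)) lef_pV2 ?posrE ?invr_gt0 ?expR_gt0 //.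
Qed.

Lemma expR_le_quad (u : R) : -(1/2) <= u -> u <= 1/2 -> expR u <= 1 + u + 2 * u^+2.
Proof.
move=> h1 h2.
have hi : u < 1 by lra.
apply: (le_trans (expR_le_inv _ hi)).
have h0 : 0 < 1 - u by lra.
rewrite -div1r ler_pdivrMr //.
have : 0 <= u^+2 * (1 - 2 * u) by apply: mulr_ge0; [exact: sqr_ge0| lra].
rewrite expr2; nra.
Qed.

Lemma expR_le_lin (v : R) : 0 <= v -> v <= 1/2 -> expR v <= 1 + 2 * v.
Proof.
move=> h1 h2.
have hi : v < 1 by lra.
apply: (le_trans (expR_le_inv _ hi)).
have h0 : 0 < 1 - v by lra.
rewrite -div1r ler_pdivrMr //. nra.
Qed.

Lemma inner_mgf (T : finType) (p e : T -> R) (d K t sg : R) :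
  (forall x, 0 <= p x) -> \sum_x p x = 1 -> \sum_x p x * e x = 0 ->
  (forall x, e x ^+ 2 <= 4 * K ^+ 2) -> d ^+ 2 <= 4 * K ^+ 2 ->
  0 < t -> 64 * t * K ^+ 2 <= 1 -> sg ^+ 2 = 1 ->
  \sum_x p x * expR (sg * t * (d ^+ 2 + 2 * d * e x))
    <= expR (sg * t * d ^+ 2) * (1 + t * d ^+ 2).
Proof.
move=> p0 p1 pe0 he hd t0 htK hsg.
have hK : 0 <= K ^+ 2 by exact: sqr_ge0.
have htd : t * d ^+ 2 <= 1/16.
  have := ler_wpM2l (ltW t0) hd; nra.
have htd0 : 0 <= t * d ^+ 2 by apply: mulr_ge0; [exact: ltW | exact: sqr_ge0].
have step : forall x, p x * expR (sg * t * (d ^+ 2 + 2 * d * e x)) <=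
   expR (sg * t * d ^+ 2) * (p x + (2 * sg * t * d) * (p x * e x) + t * d ^+ 2 * p x).
  move=> x.
  have hte : t * e x ^+ 2 <= 1/16 by have := ler_wpM2l (ltW t0) (he x); nra.
  have hte0 : 0 <= t * e x ^+ 2 by apply: mulr_ge0; [exact: ltW | exact: sqr_ge0].
  set u := sg * (2 * t * d * e x).
  have hu2 : u ^+ 2 = 4 * (t * d ^+ 2) * (t * e x ^+ 2).
    by rewrite /u exprMn hsg; ring.
  have hu2b : u ^+ 2 <= 1/64.
    rewrite hu2.
    have := ler_wpM2l htd0 hte; nra.
  have hu1 : -(1/2) <= u by nra.
  have hu1' : u <= 1/2 by nra.
  have hq := expR_le_quad _ hu1 hu1'.
  have h2u : 2 * u ^+ 2 <= t * d ^+ 2.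
    rewrite hu2. have := ler_wpM2l htd0 hte; nra.
  have -> : sg * t * (d ^+ 2 + 2 * d * e x) = sg * t * d ^+ 2 + u by rewrite /u; ring.
  rewrite expRD.
  have e0 := expR_gt0 (sg * t * d ^+ 2).
  have eu : expR u <= 1 + u + t * d ^+ 2 by lra.
  have := ler_wpM2l (p0 x) eu.
  have -> : expR (sg * t * d ^+ 2) * (p x + 2 * sg * t * d * (p x * e x) + t * d ^+ 2 * p x)
          = expR (sg * t * d ^+ 2) * (p x * (1 + u + t * d ^+ 2)) by rewrite /u; ring.
  move=> h; rewrite mulrCA. by rewrite ler_pM2l.
apply: (le_trans (ler_sum _ (fun x _ => step x))).
rewrite -mulr_sumr big_split /= big_split /= -mulr_sumr -mulr_sumr pe0 p1.
by rewrite mulr0 addr0 mulr1.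
Qed.
End Ineq.

Section Core.
Variables (R : realType) (S A : finType) (gamma lam : R)
  (P : S -> A -> {ffun S -> R}) (Rw : S -> A -> R) (mu : {ffun S * A -> R})
  (V : {ffun S -> R}) (pi : {ffun S * A -> R}).

Definition yv (x : (S * A) * S) : R :=
  Rw x.1.1 x.1.2 + gamma * V x.2 - lam * ln (pi x.1).
Definition fC := bellC P Rw gamma lam pi V.
Definition Zg (g : {ffun S * A -> R}) (x : (S * A) * S) : R :=
  (g x.1 - yv x) ^+ 2 - (fC x.1 - yv x) ^+ 2.
Definition wt (x : (S * A) * S) : R := mu x.1 * P x.1.1 x.1.2 x.2.

Lemma emp_diff n (D : {ffun 'I_n -> (S * A) * S}) (g : {ffun S * A -> R}) :
  emp_risk Rw gamma lam D g V pi - emp_risk Rw gamma lam D fC V pi =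
  n%:R^-1 * \sum_(i < n) Zg g (D i).
Proof.
rewrite /emp_risk -mulrBr -sumrB; congr (_ * _); apply: eq_bigr => i _.
rewrite /Zg /yv; ring.
Qed.

Lemma sum_pair (F : (S * A) * S -> R) :
  \sum_x F x = \sum_(sa : S * A) \sum_(s' : S) F (sa, s').
Proof. by rewrite pair_bigA; apply: eq_bigr => -[]. Qed.

Hypothesis hP1 : forall s a, \sum_(s' : S) P s a s' = 1.

Lemma mean0 (sa : S * A) :
  \sum_(s' : S) P sa.1 sa.2 s' * (fC sa - yv (sa, s')) = 0.
Proof.
have e : forall s', P sa.1 sa.2 s' * (fC sa - yv (sa, s')) =
   P sa.1 sa.2 s' * (gamma * \sum_(s'' : S) P sa.1 sa.2 s'' * V s'')
   - gamma * (P sa.1 sa.2 s' * V s').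
  by move=> s'; rewrite /fC /bellC ffunE /yv /=; ring.
under eq_bigr do rewrite e.
rewrite sumrB -mulr_suml hP1 mul1r -mulr_sumr; ring.
Qed.

Variables (K t : R).
Hypothesis hP0 : forall s a s', 0 <= P s a s'.
Hypothesis hmu0 : forall sa, 0 <= mu sa.
Hypothesis hmu1 : \sum_sa mu sa = 1.
Hypothesis t0 : 0 < t.
Hypothesis htK : 64 * t * K ^+ 2 <= 1.
Hypothesis he : forall sa s', (fC sa - yv (sa, s')) ^+ 2 <= 4 * K ^+ 2.

Lemma mgf (g : {ffun S * A -> R}) (sg : R) :
  (forall sa, (g sa - fC sa) ^+ 2 <= 4 * K ^+ 2) -> sg ^+ 2 = 1 ->
  \sum_x wt x * expR (sg * t * Zg g x) <=
  \sum_sa mu sa * (expR (sg * t * (g sa - fC sa) ^+ 2) * (1 + t * (g sa - fC sa) ^+ 2)).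
Proof.
move=> hd hsg; rewrite sum_pair; apply: ler_sum => sa _.
have -> : \sum_(s' : S) wt (sa, s') * expR (sg * t * Zg g (sa, s')) =
  mu sa * \sum_(s' : S) P sa.1 sa.2 s' *
     expR (sg * t * ((g sa - fC sa) ^+ 2 + 2 * (g sa - fC sa) * (fC sa - yv (sa, s')))).
  rewrite mulr_sumr; apply: eq_bigr => s' _; rewrite /wt /Zg /= mulrA.
  congr (_ * expR (_ * _)); ring.
apply: ler_wpM2l; first exact: hmu0.
apply: inner_mgf => //; try exact: mean0; try (move=> s'; exact: he); try (move=> s'; exact: hP0).
Qed.

Lemma mgf_low (g : {ffun S * A -> R}) :
  (forall sa, (g sa - fC sa) ^+ 2 <= 4 * K ^+ 2) ->
  \sum_x wt x * expR ((-1) * t * Zg g x) <= 1.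
Proof.
move=> hd; have hs : (-1 : R) ^+ 2 = 1 by rewrite sqrrN expr1n.
apply: (le_trans (mgf g (-1) hd hs)).
apply: (le_trans (y := \sum_sa mu sa * 1)); last first.
  by under eq_bigr do rewrite mulr1; rewrite hmu1.
apply: ler_sum => sa _; apply: ler_wpM2l; first exact: hmu0.
set v := t * (g sa - fC sa) ^+ 2.
have -> : -1 * t * (g sa - fC sa) ^+ 2 = - v by rewrite /v; ring.
rewrite expRN; have e0 := expR_gt0 v.
rewrite mulrC ler_pdivrMr // mul1r; exact: expR_ge1Dx.
Qed.

Lemma mgf_up (g : {ffun S * A -> R}) :
  (forall sa, (g sa - fC sa) ^+ 2 <= 4 * K ^+ 2) ->
  \sum_x wt x * expR (1 * t * Zg g x) <=
  expR (4 * t * sqnorm_mu mu (fun sa => g sa - fC sa)).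
Proof.
move=> hd; have hs : (1 : R) ^+ 2 = 1 by rewrite expr1n.
apply: (le_trans (mgf g 1 hd hs)).
apply: (le_trans (y := \sum_sa mu sa * (1 + 4 * t * (g sa - fC sa) ^+ 2))).
  apply: ler_sum => sa _; apply: ler_wpM2l; first exact: hmu0.
  set v := t * (g sa - fC sa) ^+ 2.
  have hv0 : 0 <= v by apply: mulr_ge0; [exact: ltW | exact: sqr_ge0].
  have hv1 : v <= 1/16.
    have hk2 := ler_wpM2l (ltW t0) (hd sa).
    have e2 : t * (4 * K ^+ 2) = 4 * (t * K ^+ 2) by ring.
    have e3 : 64 * t * K ^+ 2 = 64 * (t * K ^+ 2) by ring.
    rewrite e2 in hk2; have htK2 := htK; rewrite e3 in htK2; rewrite /v; lra.
  have -> : 1 * t * (g sa - fC sa) ^+ 2 = v by rewrite /v; ring.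
  have h1 : 1 + v <= expR v by exact: expR_ge1Dx.
  have e0 := expR_gt0 v.
  apply: (le_trans (y := expR v * expR v)); first by rewrite ler_pM2l.
  rewrite -expRD.
  have -> : 1 + 4 * t * (g sa - fC sa) ^+ 2 = 1 + 2 * (v + v) by rewrite /v; ring.
  apply: expR_le_lin; lra.
rewrite /sqnorm_mu.
have -> : \sum_sa mu sa * (1 + 4 * t * (g sa - fC sa) ^+ 2) =
   1 + 4 * t * \sum_sa mu sa * (g sa - fC sa) ^+ 2.
  under eq_bigr do rewrite mulrDr mulr1.
  rewrite big_split /= hmu1; congr (1 + _).
  rewrite mulr_sumr; apply: eq_bigr => sa _; ring.
exact: expR_ge1Dx.
Qed.
End Core.

Section Seqs.
Variable R : realType.

Lemma seqmax0_ge0 (T : eqType) (F : T -> R) s : 0 <= seqmax0 F s.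
Proof.
rewrite /seqmax0; elim: s => [|a s IH]; first by rewrite big_nil.
by rewrite big_cons le_max IH orbT.
Qed.

Lemma seqmax0_ge (T : eqType) (F : T -> R) s x : x \in s -> F x <= seqmax0 F s.
Proof.
rewrite /seqmax0; elim: s => [|a s IH] //; rewrite in_cons big_cons le_max.
case/orP => [/eqP -> | /IH ->]; by rewrite ?lexx ?orbT.
Qed.

Lemma bigmin_attained (T : eqType) (F : T -> R) (idx : R) s :
  \big[Num.min/idx]_(x <- s) F x = idx \/
  exists2 x, x \in s & \big[Num.min/idx]_(x <- s) F x = F x.
Proof.
elim: s => [|a s IH]; first by left; rewrite big_nil.
rewrite big_cons.
set m := \big[Num.min/idx]_(x <- s) F x in IH *.
have [h|h] := leP (F a) m.
  by right; exists a; rewrite ?mem_head // (min_idPl h).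
case: IH => [->|[x hx ->]]; first by left.
by right; exists x; rewrite // in_cons hx orbT.
Qed.

Lemma seqmin_attained (T : eqType) (x0 : T) (F : T -> R) s :
  s != [::] -> exists2 x, x \in s & seqmin x0 F s = F x.
Proof.
case: s => [//|a s] _; rewrite /seqmin /=.
case: (bigmin_attained _ F (F a) (a :: s)) => [->|[x hx ->]].
  by exists a; rewrite ?mem_head.
by exists x.
Qed.
End Seqs.

Section Ranges.
Variables (R : realType) (S A : finType) (gamma Rmax lam : R)
  (P : S -> A -> {ffun S -> R}) (Rw : S -> A -> R)
  (V : {ffun S -> R}) (pi : {ffun S * A -> R}).
Let K := Vlmax A gamma Rmax lam.
Hypotheses (g0 : 0 <= gamma) (g1 : gamma < 1) (l0 : 0 < lam) (hA : (0 < #|A|)%N)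
  (hR : forall s a, 0 <= Rw s a <= Rmax)
  (hP0 : forall s a s', 0 <= P s a s') (hP1 : forall s a, \sum_(s' : S) P s a s' = 1)
  (hV : forall s, 0 <= V s <= K)
  (hpi0 : forall s a, 0 < pi (s, a)) (hpi1 : forall s, \sum_(a : A) pi (s, a) = 1)
  (hpil : forall s a, `|ln (pi (s, a))| <= K / lam).

Lemma Rmax_le : Rmax <= (1 - gamma) * K.
Proof.
have hg : 1 - gamma != 0 by rewrite subr_eq0 eq_sym lt_eqF.
rewrite /K /Vlmax mulrC divfK //.
have : 0 <= ln (#|A|%:R : R) by apply: ln_ge0; rewrite ler1n.
move=> h2; have := mulr_ge0 (ltW l0) h2; lra.
Qed.

Lemma lnpi_range s a : - K <= lam * ln (pi (s, a)) <= 0.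
Proof.
have hle1 : pi (s, a) <= 1.
  rewrite -(hpi1 s) (bigD1 a) //= lerDl; apply: sumr_ge0 => b _; exact: ltW.
have hln := ln_le0 hle1.
have := hpil s a; rewrite ler_norml => /andP[h1 _].
have h2 := ler_wpM2l (ltW l0) h1.
rewrite mulrN mulrCA divff ?mulr1 in h2; last exact: lt0r_neq0.
have h3 := ler_wpM2l (ltW l0) hln; rewrite mulr0 in h3.
by apply/andP; split.
Qed.

Lemma PV_range s a : 0 <= \sum_(s' : S) P s a s' * V s' <= K.
Proof.
apply/andP; split.
  apply: sumr_ge0 => s' _; apply: mulr_ge0 => //; by case/andP: (hV s').
rewrite -[X in _ <= X]mul1r -(hP1 s a) mulr_suml; apply: ler_sum => s' _.
apply: ler_wpM2l => //; by case/andP: (hV s').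
Qed.

Lemma fC_range sa : 0 <= fC R S A gamma lam P Rw V pi sa <= 2 * K.
Proof.
case: sa => s a; rewrite /fC /bellC ffunE /=.
have := Rmax_le; have := lnpi_range s a; have := PV_range s a; have := hR s a.
move=> /andP[r0 r1] /andP[p0 p1] /andP[q0 q1] hm.
have := mulr_ge0 g0 p0; have := ler_wpM2l g0 p1.
have : 0 <= gamma * K by apply: mulr_ge0 => //; lra.
move=> *; apply/andP; split; nra.
Qed.

Lemma yv_range sa s' : 0 <= yv R S A gamma lam Rw V pi (sa, s') <= 2 * K.
Proof.
case: sa => s a; rewrite /yv /=.
have := Rmax_le; have := lnpi_range s a; have := hV s'; have := hR s a.
move=> /andP[r0 r1] /andP[p0 p1] /andP[q0 q1] hm.
have := mulr_ge0 g0 p0; have := ler_wpM2l g0 p1.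
move=> *; apply/andP; split; nra.
Qed.
End Ranges.
Section Prob.
Variables (R : realType) (X : finType) (n : nat) (w : X -> R).
Hypothesis w_ge0 : forall x, 0 <= w x.

Definition W (D : {ffun 'I_n -> X}) : R := \prod_(i < n) w (D i).
Definition Pr (E : pred {ffun 'I_n -> X}) : R := \sum_(D | E D) W D.

Lemma W_ge0 D : 0 <= W D.
Proof. by apply: prodr_ge0 => i _; apply: w_ge0. Qed.

Lemma Pr_fact (h : X -> R) :
  \sum_D W D * \prod_(i < n) h (D i) = \prod_(i < n) \sum_x w x * h x.
Proof.
rewrite bigA_distr_bigA; apply: eq_bigr => D _.
by rewrite /W -big_split.
Qed.

Lemma Pr_total : \sum_x w x = 1 -> \sum_D W D = 1.
Proof.
move=> h1.
have := Pr_fact (fun=> 1).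
have e1 : forall D : {ffun 'I_n -> X}, W D * \prod_(i < n) (fun=> 1 : R) (D i) = W D.
  by move=> D; rewrite big1_eq mulr1.
under eq_bigr do rewrite e1.
move=> ->; apply: big1 => i _.
under eq_bigr do rewrite mulr1. exact: h1.
Qed.

Lemma Pr_mono (E F : pred {ffun 'I_n -> X}) :
  (forall D, E D -> F D) -> Pr E <= Pr F.
Proof.
move=> hEF; rewrite /Pr [X in _ <= X](bigID E) /=.
have -> : \sum_(i | F i && E i) W i = \sum_(i | E i) W i.
  by apply: eq_bigl => D; case: (boolP (E D)) => hD; rewrite ?andbT ?andbF ?(hEF _ hD).
rewrite lerDl; apply: sumr_ge0 => D _; exact: W_ge0.
Qed.

Lemma Pr_compl (E : pred {ffun 'I_n -> X}) :
  \sum_x w x = 1 -> Pr E = 1 - Pr (predC E).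
Proof.
move=> h1; rewrite /Pr -(Pr_total h1) [\sum_D W D](bigID E) /= addrK; exact: eq_bigl.
Qed.

Lemma Pr_markov (E : pred {ffun 'I_n -> X}) (h : X -> R) (a : R) :
  (forall x, 0 <= h x) -> 0 < a -> (forall D, E D -> a <= \prod_(i < n) h (D i)) ->
  Pr E <= (\prod_(i < n) \sum_x w x * h x) / a.
Proof.
move=> h0 a0 hE; rewrite -Pr_fact ler_pdivlMr // /Pr big_distrl /=.
apply: (le_trans (y := \sum_(D | E D) W D * \prod_(i < n) h (D i))).
  apply: ler_sum => D /hE hD.
  apply: ler_wpM2l; first exact: W_ge0. exact: hD.
rewrite [X in _ <= X](bigID E) /= lerDl; apply: sumr_ge0 => D _.
apply: mulr_ge0; first exact: W_ge0. by apply: prodr_ge0 => i _.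
Qed.

Lemma Pr_union (J : finType) (G : J -> pred {ffun 'I_n -> X}) :
  Pr (fun D => ~~ [forall j, G j D]) <= \sum_j Pr (fun D => ~~ G j D).
Proof.
rewrite /Pr (exchange_big_dep xpredT) //=.
rewrite [X in _ <= X](bigID (fun D => ~~ [forall j, G j D])) /= -[X in X <= _]addr0.
apply: lerD.
  apply: ler_sum => D /forallPn [j hj].
  rewrite (bigD1 j) //= lerDl; apply: sumr_ge0 => ? _; exact: W_ge0.
apply: sumr_ge0 => D _; apply: sumr_ge0 => ? _; exact: W_ge0.
Qed.
End Prob.
Lemma final_ineq (R : realType) (a b f X Y ni nn e s io : R) :
  0 < ni -> ni * nn = 1 -> 0 <= e -> 0 <= s -> 0 <= io ->
  a - f = ni * X -> b - f = ni * Y -> a <= b ->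
  - (64 * io) < X -> Y < 4 * nn * e + 64 * io ->
  `|a - f| <= 64 * (e + s + io * ni).
Proof.
move=> ni0 hn e0 s0 io0 ha hb hab hX hY.
have h1 := ler_wpM2l (ltW ni0) (ltW hX).
have h2 := ler_wpM2l (ltW ni0) (ltW hY).
have e1 : ni * (- (64 * io)) = - 64 * (io * ni) by ring.
have e2 : ni * (4 * nn * e + 64 * io) = 4 * (ni * nn) * e + 64 * (io * ni) by ring.
rewrite e1 in h1; rewrite e2 hn in h2.
have : 0 <= io * ni by apply: mulr_ge0 => //; exact: ltW.
rewrite ler_norml; move=> h3; apply/andP; split; lra.
Qed.

Theorem mainTheorem8 (R : realType) :
  exists c : R, 0 < c /\
  forall (S A : finType) (gamma Rmax lam : R)
    (P : S -> A -> {ffun S -> R}) (Rw : S -> A -> R) (mu : {ffun S * A -> R})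
    (Vs : seq {ffun S -> R}) (Ps : seq {ffun S * A -> R}) (Gs : seq {ffun S * A -> R})
    (n : nat) (delta : R)
    (ghat : {ffun 'I_n -> (S * A) * S} -> {ffun S -> R} -> {ffun S * A -> R} ->
            {ffun S * A -> R}),
  0 <= gamma -> gamma < 1 -> 0 < lam -> (0 < #|A|)%N ->
  (forall s a, 0 <= Rw s a <= Rmax) ->
  (forall s a s', 0 <= P s a s') -> (forall s a, \sum_(s' : S) P s a s' = 1) ->
  (forall sa, 0 <= mu sa) -> \sum_(sa : S * A) mu sa = 1 ->
  uniq Vs -> uniq Ps -> uniq Gs ->
  Vs != [::] -> Ps != [::] -> Gs != [::] ->
  (forall V, V \in Vs -> forall s, 0 <= V s <= Vlmax A gamma Rmax lam) ->
  (forall pi, pi \in Ps ->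
     (forall s a, 0 < pi (s, a)) /\ (forall s, \sum_(a : A) pi (s, a) = 1) /\
     (forall s a, `|ln (pi (s, a))| <= Vlmax A gamma Rmax lam / lam)) ->
  (forall g, g \in Gs -> forall sa, 0 <= g sa <= 2 * Vlmax A gamma Rmax lam) ->
  (0 < n)%N ->
  (forall D V pi, V \in Vs -> pi \in Ps ->
     ghat D V pi \in Gs /\
     (forall g, g \in Gs -> emp_risk Rw gamma lam D (ghat D V pi) V pi
                           <= emp_risk Rw gamma lam D g V pi)) ->
  0 < delta -> delta < 1 ->
  let eps := eps_approx P Rw gamma lam mu Vs Ps Gs in
  let iota := Vlmax A gamma Rmax lam ^+ 2 *
              ln ((size Vs)%:R * (size Ps)%:R * (size Gs)%:R / delta) in
  1 - 2 * delta <=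
  data_prob mu P (fun D =>
    [forall V : seq_sub Vs, forall pi : seq_sub Ps,
      `| emp_risk Rw gamma lam D (ghat D (val V) (val pi)) (val V) (val pi)
         - emp_risk Rw gamma lam D (bellC P Rw gamma lam (val pi) (val V)) (val V) (val pi) |
      <= c * (eps + Num.sqrt (iota / n%:R * eps) + iota / n%:R)]).
Proof.
exists 64; split; first lra.
move=> S A gamma Rmax lam P Rw mu Vs Ps Gs n delta ghat g0 g1 l0 hA hR hP0 hP1
  hmu0 hmu1 uV uP uG nV nP nG hVs hPs hGs n0 hghat d0 d1.
cbv zeta.
set eps := eps_approx P Rw gamma lam mu Vs Ps Gs.
set K := Vlmax A gamma Rmax lam.
set N : R := (size Vs)%:R * (size Ps)%:R * (size Gs)%:R.
set L := ln (N / delta).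
set iota := K ^+ 2 * L.
have N1 : 1 <= N.
  rewrite /N -!natrM ler1n !muln_gt0.
  by rewrite !lt0n !size_eq0 nV nP nG.
have Nd0 : 0 < N / delta by apply: divr_gt0 => //; lra.
have Nd1 : 1 <= N / delta.
  rewrite ler_pdivlMr //; lra.
have L0 : 0 <= L by apply: ln_ge0.
have eps0 : 0 <= eps by exact: seqmax0_ge0.
have nR0 : 0 < n%:R :> R by rewrite ltr0n.
have iota0 : 0 <= iota by apply: mulr_ge0 => //; exact: sqr_ge0.
have rhs0 : 0 <= eps + Num.sqrt (iota / n%:R * eps) + iota / n%:R.
  have := sqrtr_ge0 (iota / n%:R * eps).
  have : 0 <= iota / n%:R by apply: divr_ge0 => //; exact: ltW.
  lra.
set w := wt R S A P mu.
have w0 : forall x, 0 <= w x.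
  by move=> x; apply: mulr_ge0; [exact: hmu0 | exact: hP0].
have w1 : \sum_x w x = 1.
  rewrite sum_pair -hmu1; apply: eq_bigr => sa _.
  by rewrite /w /wt /= -mulr_sumr hP1 mulr1.
have dpE : forall E, data_prob mu P E = Pr R _ n w E by [].
rewrite dpE.
have sqd : forall a b : R, 0 <= a <= 2 * K -> 0 <= b <= 2 * K -> (a - b) ^+ 2 <= 4 * K ^+ 2.
  by move=> a b /andP[? ?] /andP[? ?]; nra.
have rngs : forall V pi, V \in Vs -> pi \in Ps ->
   (forall sa, 0 <= fC R S A gamma lam P Rw V pi sa <= 2 * K) /\
   (forall sa s', 0 <= yv R S A gamma lam Rw V pi (sa, s') <= 2 * K).
  move=> V pi hV hp; have [h1 [h2 h3]] := hPs pi hp.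
  split => [sa|sa s'].
    by apply: fC_range => //; apply: hVs.
  by apply: yv_range => //; apply: hVs.
have ediff : forall D V pi (g : {ffun S * A -> R}),
    emp_risk Rw gamma lam D g V pi - emp_risk Rw gamma lam D (bellC P Rw gamma lam pi V) V pi
    = n%:R^-1 * \sum_(i < n) Zg R S A gamma lam P Rw V pi g (D i).
  by move=> D V pi g; have ed := emp_diff R S A gamma lam P Rw V pi n D g; rewrite /fC in ed.
have Ptot : Pr R _ n w xpredT = 1 by exact: Pr_total.
have [Kpos|Kle] := ltP 0 K; last first.
  apply: (le_trans (y := Pr R _ n w xpredT)); first by rewrite Ptot; lra.
  apply: Pr_mono => // D _.
  apply/forallP => v; apply/forallP => p.
  have [hg _] := hghat D (val v) (val p) (valP v) (valP p).
  have [rf ry] := rngs (val v) (val p) (valP v) (valP p).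
  rewrite ediff.
  have -> : \sum_(i < n) Zg R S A gamma lam P Rw (val v) (val p) (ghat D (val v) (val p)) (D i) = 0.
    apply: big1 => i _; rewrite /Zg.
    have := rf (D i).1; have := hGs _ hg (D i).1.
    move=> /andP[a1 a2] /andP[b1 b2].
    have hK0 : K <= 0 := Kle.
    have a2' : ghat D (val v) (val p) (D i).1 <= 2 * K := a2.
    have eq1 : ghat D (val v) (val p) (D i).1 = fC R S A gamma lam P Rw (val v) (val p) (D i).1.
      apply/eqP; rewrite eq_le; apply/andP; split.
      - apply: (le_trans a2'); apply: (le_trans _ b1); lra.
      - apply: (le_trans b2); apply: (le_trans _ a1); lra.
    by rewrite eq1 subrr.
  by rewrite mulr0 normr0; apply: mulr_ge0.
set t : R := (64 * K ^+ 2)^-1.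
have K2 : 0 < K ^+ 2 by rewrite exprn_gt0.
have K64 : 0 < 64 * K ^+ 2 by apply: mulr_gt0.
have t0 : 0 < t by rewrite invr_gt0.
have htK : 64 * t * K ^+ 2 <= 1.
  by rewrite /t mulrAC mulfV ?lt0r_neq0.
have hLt : L = t * (64 * iota).
  by rewrite /t /iota; field; rewrite lt0r_neq0.
have heV : forall (v : seq_sub Vs) (p : seq_sub Ps) sa s',
   (fC R S A gamma lam P Rw (val v) (val p) sa - yv R S A gamma lam Rw (val v) (val p) (sa, s')) ^+ 2 <= 4 * K ^+ 2.
  move=> v p sa s'; have [rf ry] := rngs _ _ (valP v) (valP p).
  exact: sqd.
have hdV : forall (v : seq_sub Vs) (p : seq_sub Ps) g, g \in Gs -> forall sa,
   (g sa - fC R S A gamma lam P Rw (val v) (val p) sa) ^+ 2 <= 4 * K ^+ 2.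
  move=> v p g hg sa; have [rf ry] := rngs _ _ (valP v) (valP p).
  exact: sqd (hGs _ hg sa) (rf sa).
have hstar : forall vp : seq_sub Vs * seq_sub Ps, exists g : {ffun S * A -> R},
   (g \in Gs) && (sqnorm_mu mu (fun sa => g sa - fC R S A gamma lam P Rw (val vp.1) (val vp.2) sa) <= eps).
  move=> [v p].
  have [g hg he] := seqmin_attained _ _ ([ffun=> 0] : {ffun S * A -> R})
     (fun g : {ffun S * A -> R} => sqnorm_mu mu (fun sa => g sa - bellC P Rw gamma lam (val p) (val v) sa)) _ nG.
  exists g; rewrite hg /=.
  apply: (le_trans _ (seqmax0_ge _ _ _ _ _ (valP v))) => /=.
  apply: (le_trans _ (seqmax0_ge _ _ _ _ _ (valP p))) => /=.
  by rewrite he.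
have [gs hgs] := choice hstar.
pose GL (j : seq_sub Vs * seq_sub Ps * seq_sub Gs) (D : {ffun 'I_n -> (S * A) * S}) :=
  - (64 * iota) < \sum_(i < n) Zg R S A gamma lam P Rw (val j.1.1) (val j.1.2) (val j.2) (D i).
pose GU (j : seq_sub Vs * seq_sub Ps) (D : {ffun 'I_n -> (S * A) * S}) :=
  \sum_(i < n) Zg R S A gamma lam P Rw (val j.1) (val j.2) (gs j) (D i) < 4 * n%:R * eps + 64 * iota.
pose Gall (D : {ffun 'I_n -> (S * A) * S}) :=
  [forall b : bool, if b then [forall j, GL j D] else [forall j, GU j D]].
have claim1 : forall D, Gall D ->
  [forall V : seq_sub Vs, forall pi : seq_sub Ps,
      `| emp_risk Rw gamma lam D (ghat D (val V) (val pi)) (val V) (val pi)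
         - emp_risk Rw gamma lam D (bellC P Rw gamma lam (val pi) (val V)) (val V) (val pi) |
      <= 64 * (eps + Num.sqrt (iota / n%:R * eps) + iota / n%:R)].
  move=> D /forallP hG.
  have /forallP hL := hG true; have /forallP hU := hG false.
  apply/forallP => v; apply/forallP => p.
  have [hg hmin] := hghat D (val v) (val p) (valP v) (valP p).
  have /andP[hgs1 hgs2] := hgs (v, p).
  have l1 := hL (v, p, SeqSub hg).
  have u1 := hU (v, p).
  have m1 := hmin _ hgs1.
  have e1 := ediff D (val v) (val p) (ghat D (val v) (val p)).
  have e2 := ediff D (val v) (val p) (gs (v, p)).
  apply: (final_ineq _ _ (emp_risk Rw gamma lam D (gs (v, p)) (val v) (val p)) _
            (\sum_(i < n) Zg R S A gamma lam P Rw (val v) (val p) (ghat D (val v) (val p)) (D i))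
            (\sum_(i < n) Zg R S A gamma lam P Rw (val v) (val p) (gs (v, p)) (D i)) _ n%:R) => //.
  - by rewrite invr_gt0.
  - by rewrite mulVf // lt0r_neq0.
have NdE : N / delta = expR L by rewrite /L lnK // posrE.
have claim2 : forall j, Pr R _ n w (fun D => ~~ GL j D) <= delta / N.
  move=> [[v p] g].
  pose h x := expR (-1 * t * Zg R S A gamma lam P Rw (val v) (val p) (val g) x).
  apply: (le_trans (Pr_markov R _ n w w0 _ h (N / delta) _ Nd0 _)).
  - by move=> x; exact: expR_ge0.
  - move=> D; rewrite /GL /= -leNgt => hD.
    rewrite /h -expR_sum NdE ler_expR -mulr_sumr.
    have := ler_wpM2l (ltW t0) hD; rewrite hLt; lra.
  have hP : \prod_(i < n) \sum_x w x * h x <= 1.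
    apply: prodr_ile1 => i _; apply/andP; split.
      by apply: sumr_ge0 => x _; apply: mulr_ge0 => //; exact: expR_ge0.
    apply: (mgf_low R S A gamma lam P Rw mu (val v) (val p) hP1 K t) => //.
    by move=> sa; apply: hdV; exact: valP.
  rewrite ler_pdivrMr //.
  have -> : delta / N * (N / delta) = 1.
    by field; apply/andP; split; rewrite lt0r_neq0 //; lra.
  exact: hP.
have claim3 : forall j, Pr R _ n w (fun D => ~~ GU j D) <= delta / N.
  move=> j; have /andP[hg1 hg2] := hgs j.
  pose h x := expR (1 * t * Zg R S A gamma lam P Rw (val j.1) (val j.2) (gs j) x).
  pose c := 4 * t * eps.
  apply: (le_trans (Pr_markov R _ n w w0 _ h (expR (c * n%:R + L)) _ (expR_gt0 _) _)).
  - by move=> x; exact: expR_ge0.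
  - move=> D; rewrite /GU /= -leNgt => hD.
    rewrite /h -expR_sum ler_expR -mulr_sumr.
    have := ler_wpM2l (ltW t0) hD; rewrite hLt /c; lra.
  have hP : \prod_(i < n) \sum_x w x * h x <= \prod_(i < n) expR c.
    apply: ler_prod => i _; apply/andP; split.
      by apply: sumr_ge0 => x _; apply: mulr_ge0 => //; exact: expR_ge0.
    apply: le_trans; first apply: (mgf_up R S A gamma lam P Rw mu (val j.1) (val j.2) hP1 K t) => //.
      by move=> sa; apply: hdV.
    rewrite ler_expR /c; apply: ler_wpM2l => //; apply: mulr_ge0 => //; exact: ltW.
  rewrite ler_pdivrMr ?expR_gt0 //.
  apply: (le_trans hP).
  rewrite -expR_sum sumr_const card_ord.
  have -> : delta / N = expR (- L) by rewrite expRN -NdE invf_div.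
  rewrite -expRD ler_expR -mulr_natr; lra.
apply: (le_trans _ (Pr_mono R _ n w w0 Gall _ claim1)).
rewrite (Pr_compl R _ n w Gall w1).
have hU := Pr_union R _ n w w0 bool (fun b D => if b then [forall j, GL j D] else [forall j, GU j D]).
rewrite big_bool /= in hU.
have cL : Pr R _ n w (fun D => ~~ [forall j, GL j D]) <= delta.
  apply: (le_trans (Pr_union R _ n w w0 _ GL)).
  apply: (le_trans (ler_sum _ (fun j _ => claim2 j))).
  rewrite sumr_const !card_prod !card_seq_sub // -mulr_natr !natrM -/N.
  rewrite divfK ?lt0r_neq0 //; lra.
have cU : Pr R _ n w (fun D => ~~ [forall j, GU j D]) <= delta.
  apply: (le_trans (Pr_union R _ n w w0 _ GU)).
  apply: (le_trans (ler_sum _ (fun j _ => claim3 j))).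
  rewrite sumr_const !card_prod !card_seq_sub // -mulr_natr natrM.
  have hG1 : 1 <= (size Gs)%:R :> R by rewrite ler1n lt0n size_eq0.
  have hN : (size Vs)%:R * (size Ps)%:R <= N :> R.
    rewrite /N -[X in X <= _]mulr1; apply: ler_wpM2l => //.
  have hdN : 0 <= delta / N by apply: divr_ge0; lra.
  apply: (le_trans (ler_wpM2l hdN hN)).
  rewrite divfK ?lt0r_neq0 //; lra.
lra.
Qed.
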